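(* Let $F_1,F_2\colon\mathbf{A}\to\mathbf{B}$ be lenses, and let $E\colon\mathbf{B}\to\mathbf{C}$ be a lens with $E\circ F_1=E\circ F_2$ such that the get functor $UE$ is a coequaliser of $UF_1$ and $UF_2$ in $\mathbf{Cat}$. If $UE$ is a discrete opfibration, then $E$ is a coequaliser of $F_1$ and $F_2$ in $\mathbf{Lens}$.
   Context: A lens $F\colon \mathbf{A}\to\mathbf{B}$ between small categories consists of a functor $F\colon\mathbf{A}\to\mathbf{B}$ (the get functor) together with, for each object $A$ of $\mathbf{A}$, a function $\varphi_{F,A}$ from the set of morphisms of $\mathbf{B}$ with domain $FA$ to the set of morphisms of $\mathbf{A}$ with domain $A$, such that: $F(\varphi_{F,A}b)=b$; $\varphi_{F,A}(\mathrm{id}_{FA})=\mathrm{id}_A$; and $\varphi_{F,A}(b'\circ b)=\varphi_{F,A'}(b')\circ\varphi_{F,A}(b)$ whenever $b$ has domain $FA$, $A'$ is the codomain of $\varphi_{F,A}b$, and $b'$ has domain $FA'$. $\mathbf{Lens}$ is the category of small categories and lenses, with composite of $F\colon\mathbf{A}\to\mathbf{B}$, $G\colon\mathbf{B}\to\mathbf{C}$ having get functor $G\circ F$ and puts $\varphi_{G\circ F,A}(c)=\varphi_{F,A}(\varphi_{G,FA}(c))$. $U\colon\mathbf{Lens}\to\mathbf{Cat}$ sends a lens to its get functor. A functor $F\colon\mathbf{A}\to\mathbf{B}$ is a discrete opfibration if for each object $A$ and each morphism $b$ of $\mathbf{B}$ with domain $FA$ there is a unique morphism $a$ of $\mathbf{A}$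 with domain $A$ and $Fa=b$. *)

(* Defs.v *)
(* Plain Rocq (no library): small categories presented by a type of objects,
   a single type of morphisms with dom/cod, identities and composition.
   [comp g f] is g \o f, meaningful when [cod f = dom g]. *)

Record Category := {
  Ob : Type;
  Mor : Type;
  dom : Mor -> Ob;
  cod : Mor -> Ob;
  idm : Ob -> Mor;
  comp : Mor -> Mor -> Mor;
  dom_id : forall x, dom (idm x) = x;
  cod_id : forall x, cod (idm x) = x;
  dom_comp : forall g f, cod f = dom g -> dom (comp g f) = dom f;
  cod_comp : forall g f, cod f = dom g -> cod (comp g f) = cod g;
  comp_id_l : forall f, comp (idm (cod f)) f = f;
  comp_id_r : forall f, comp f (idm (dom f)) = f;
  comp_assoc : forall h g f, cod f = dom g -> cod g = dom h ->
      comp h (comp g f) = comp (comp h g) f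
}.

Arguments dom {c} _.
Arguments cod {c} _.
Arguments idm {c} _.
Arguments comp {c} _ _.

Record Functor (A B : Category) := {
  fo : Ob A -> Ob B;
  fm : Mor A -> Mor B;
  f_dom : forall f, dom (fm f) = fo (dom f);
  f_cod : forall f, cod (fm f) = fo (cod f);
  f_id : forall x, fm (idm x) = idm (fo x);
  f_comp : forall g f, cod f = dom g -> fm (comp g f) = comp (fm g) (fm f)
}.

Arguments fo {A B} _ _.
Arguments fm {A B} _ _.

Definition feq {A B : Category} (F G : Functor A B) : Prop :=
  (forall x, fo F x = fo G x) /\ (forall f, fm F f = fm G f).

Definition fcompose {A B C : Category} (G : Functor B C) (F : Functor A B)
  : Functor A C.
Proof.
  refine {| fo := fun x => fo G (fo F x); fm := fun f => fm G (fm F f) |}.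
  - intro f. rewrite (f_dom _ _ G), (f_dom _ _ F). reflexivity.
  - intro f. rewrite (f_cod _ _ G), (f_cod _ _ F). reflexivity.
  - intro x. rewrite (f_id _ _ F), (f_id _ _ G). reflexivity.
  - intros g f H. rewrite (f_comp _ _ F g f H), (f_comp _ _ G).
    + reflexivity.
    + rewrite (f_cod _ _ F), (f_dom _ _ F), H. reflexivity.
Defined.

(* A lens: get functor plus, for each object a, a put function on the
   morphisms of B with domain (get a); put is given as a total function
   whose values matter only on such morphisms. *)
Record Lens (A B : Category) := {
  get : Functor A B;
  put : Ob A -> Mor B -> Mor A;
  put_dom : forall a b, dom b = fo get a -> dom (put a b) = a;
  put_get : forall a b, dom b = fo get a -> fm get (put a b) = b;
  put_id : forall a, put a (idm (fo get a)) = idm a;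
  put_comp : forall a b b', dom b = fo get a ->
      dom b' = fo get (cod (put a b)) ->
      put a (comp b' b) = comp (put (cod (put a b)) b') (put a b)
}.

Arguments get {A B} _.
Arguments put {A B} _ _ _.

Definition leq {A B : Category} (L M : Lens A B) : Prop :=
  feq (get L) (get M) /\
  (forall a b, dom b = fo (get L) a -> put L a b = put M a b).

Definition lcompose {A B C : Category} (G : Lens B C) (F : Lens A B)
  : Lens A C.
Proof.
  refine {| get := fcompose (get G) (get F);
            put := fun a c => put F a (put G (fo (get F) a) c) |}.
  - simpl. intros a c H. apply (put_dom _ _ F). apply (put_dom _ _ G). exact H.
  - simpl. intros a c H. rewrite (put_get _ _ F).
    + apply (put_get _ _ G). exact H.
    + apply (put_dom _ _ G). exact H.
  - simpl. intro a. rewrite (put_id _ _ G). apply (put_id _ _ F).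
  - simpl. intros a c c' Hc Hc'.
    set (b := put G (fo (get F) a) c).
    assert (Hb : dom b = fo (get F) a) by (apply (put_dom _ _ G); exact Hc).
    assert (Hcb : cod b = fo (get F) (cod (put F a b))).
    { rewrite <- (f_cod _ _ (get F)). rewrite (put_get _ _ F a b Hb). reflexivity. }
    rewrite (put_comp _ _ G (fo (get F) a) c c' Hc).
    2:{ fold b. rewrite Hcb. exact Hc'. }
    fold b. rewrite (put_comp _ _ F a b).
    + rewrite Hcb. reflexivity.
    + exact Hb.
    + rewrite (put_dom _ _ G).
      * exact Hcb.
      * rewrite Hcb. exact Hc'.
Defined.

Definition is_coequaliser_Cat {A B C : Category} (F1 F2 : Functor A B)
    (E : Functor B C) : Prop :=
  feq (fcompose E F1) (fcompose E F2) /\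
  forall (D : Category) (K : Functor B D),
    feq (fcompose K F1) (fcompose K F2) ->
    exists H : Functor C D,
      feq (fcompose H E) K /\
      forall H' : Functor C D, feq (fcompose H' E) K -> feq H' H.

Definition is_coequaliser_Lens {A B C : Category} (F1 F2 : Lens A B)
    (E : Lens B C) : Prop :=
  leq (lcompose E F1) (lcompose E F2) /\
  forall (D : Category) (K : Lens B D),
    leq (lcompose K F1) (lcompose K F2) ->
    exists H : Lens C D,
      leq (lcompose H E) K /\
      forall H' : Lens C D, leq (lcompose H' E) K -> leq H' H.

Definition discrete_opfibration {A B : Category} (F : Functor A B) : Prop :=
  forall (a : Ob A) (b : Mor B), dom b = fo F a ->
    exists! m : Mor A, dom m = a /\ fm F m = b.

(* Main.v *)
Require Import Defs.
From Stdlib Require Import FunctionalExtensionality PropExtensionality ClassicalEpsilon.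

Definition chaotic (T : Type) : Category.
Proof.
  refine {| Ob := T; Mor := T * T; dom := fst; cod := snd;
            idm := fun x => (x, x); comp := fun g f => (fst f, snd g) |}.
  all: try reflexivity.
  - intros [a b]; reflexivity.
  - intros [a b]; reflexivity.
Defined.

Definition chaoticF {X : Category} {T : Type} (g : Ob X -> T) : Functor X (chaotic T).
Proof.
  refine (@Build_Functor X (chaotic T) g (fun f => (g (dom f), g (cod f))) _ _ _ _).
  - reflexivity.
  - reflexivity.
  - intro x. simpl. rewrite dom_id, cod_id. reflexivity.
  - intros h f H. simpl. rewrite dom_comp, cod_comp by exact H. reflexivity.
Defined.

Section S.
Variables (A B C : Category) (F1 F2 : Lens A B) (E : Lens B C).
Hypothesis Hcoeq : is_coequaliser_Cat (get F1) (get F2) (get E).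

Lemma surj : forall c, exists b, fo (get E) b = c.
Proof.
  destruct Hcoeq as [_ U].
  set (K' := @chaoticF B Prop (fun _ => True)).
  destruct (U (chaotic Prop) K') as [H0 [_ Hu]].
  { split; reflexivity. }
  set (H1 := @chaoticF C Prop (fun c => exists b, fo (get E) b = c)).
  set (H2 := @chaoticF C Prop (fun c => True)).
  assert (E1 : forall c, fo H1 c = fo H0 c).
  { apply Hu. split.
    - intro x. simpl. apply propositional_extensionality. split; eauto.
    - intro f. simpl. f_equal; apply propositional_extensionality; split; eauto;
      intros _; eexists; symmetry; apply f_dom || apply f_cod. }
  assert (E2 : forall c, fo H2 c = fo H0 c).
  { apply Hu. split; reflexivity. }
  intro c. specialize (E1 c). specialize (E2 c). simpl in E1, E2.
  rewrite E1, <- E2. exact I.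
Qed.

Lemma quot (R : Ob B -> Ob B -> Prop) :
  (forall x, R x x) -> (forall x y, R x y -> R y x) ->
  (forall x y z, R x y -> R y z -> R x z) ->
  (forall a, R (fo (get F1) a) (fo (get F2) a)) ->
  forall b b', fo (get E) b = fo (get E) b' -> R b b'.
Proof.
  intros Rr Rs Rt Ra b b' Hb.
  destruct Hcoeq as [_ U].
  set (K' := @chaoticF B (Ob B -> Prop) R).
  assert (Hext : forall a, R (fo (get F1) a) = R (fo (get F2) a)).
  { intro a. apply functional_extensionality. intro x.
    apply propositional_extensionality. split; eauto. }
  destruct (U _ K') as [H0 [[Hf _] _]].
  { split.
    - intro x. simpl. apply Hext.
    - intro f. simpl. rewrite !f_dom, !f_cod, !Hext. reflexivity. }
  pose proof (Hf b) as e1. pose proof (Hf b') as e2. simpl in e1, e2.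
  rewrite Hb, e2 in e1. rewrite <- e1. apply Rr.
Qed.
End S.

Theorem corollary4p7 (A B C : Category) (F1 F2 : Lens A B) (E : Lens B C) :
  leq (lcompose E F1) (lcompose E F2) ->
  is_coequaliser_Cat (get F1) (get F2) (get E) ->
  discrete_opfibration (get E) ->
  is_coequaliser_Lens F1 F2 E.
Proof.
  intros HEF Hcoeq Hdo. split; [exact HEF|].
  intros D K [HKf HKp].
  pose proof Hcoeq as [_ U].
  destruct (U D (get K) HKf) as [H0 [[Ho Hm] Hu]].
  set (R := fun b b' => fo (get K) b = fo (get K) b' /\
             forall d, dom d = fo (get K) b ->
               fm (get E) (put K b d) = fm (get E) (put K b' d)).
  assert (key : forall b b', fo (get E) b = fo (get E) b' -> R b b').
  { apply (quot A B C F1 F2 E Hcoeq).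
    - intro x; split; auto.
    - intros x y [h1 h2]; split; auto. intros d Hd. symmetry. apply h2. congruence.
    - intros x y z [h1 h2] [h3 h4]; split; [congruence|].
      intros d Hd. rewrite h2 by exact Hd. apply h4. congruence.
    - intro a. destruct HKf as [Hfo _]. split; [apply (Hfo a)|].
      intros d Hd.
      assert (Hd2 : dom d = fo (get K) (fo (get F2) a)) by (pose proof (Hfo a) as Q; simpl in Q; rewrite <- Q; exact Hd).
      pose proof (HKp a d Hd) as P. simpl in P.
      assert (P1 : fm (get F1) (put F1 a (put K (fo (get F1) a) d)) = put K (fo (get F1) a) d).
      { apply put_get. apply put_dom. exact Hd. }
      assert (P2 : fm (get F2) (put F2 a (put K (fo (get F2) a) d)) = put K (fo (get F2) a) d).
      { apply put_get. apply put_dom. exact Hd2. }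
      rewrite <- P1, <- P2, P. destruct HEF as [[_ Hm'] _]. apply Hm'. }
  assert (X : forall c, {b | fo (get E) b = c}).
  { intro c. apply constructive_indefinite_description. apply (surj A B C F1 F2 E Hcoeq). }
  assert (HoK : forall b, fo H0 (fo (get E) b) = fo (get K) b) by exact Ho.
  assert (HmK : forall f, fm H0 (fm (get E) f) = fm (get K) f) by exact Hm.
  assert (opf : forall b m, dom m = b -> put E b (fm (get E) m) = m).
  { intros b m Hmb.
    assert (Hd : dom (fm (get E) m) = fo (get E) b) by (rewrite f_dom; congruence).
    destruct (Hdo b _ Hd) as [m0 [_ Hun]].
    transitivity m0; [symmetry|]; apply Hun; split; auto.
    - apply put_dom; exact Hd.
    - apply put_get; exact Hd. }
  unshelve eexists (Build_Lens C D H0 (fun c d => fm (get E) (put K (proj1_sig (X c)) d)) _ _ _ _).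
  - intros c d Hd. cbv beta; destruct (X c) as [b Hb]; simpl; subst c.
    rewrite f_dom, put_dom; auto. rewrite <- HoK; exact Hd.
  - intros c d Hd. cbv beta; destruct (X c) as [b Hb]; simpl; subst c.
    rewrite HmK, put_get; auto. rewrite <- HoK; exact Hd.
  - intros c. cbv beta; destruct (X c) as [b Hb]; simpl; subst c.
    rewrite HoK, put_id, f_id. reflexivity.
  - intros c d d' Hd Hd'. cbv beta in *; revert Hd'; destruct (X c) as [b Hb]; simpl in *; subst c; intro Hd'.
    rewrite HoK in Hd.
    set (m := put K b d) in *.
    assert (Hmd : dom m = b) by (apply put_dom; exact Hd).
    assert (Hcm : cod (fm (get E) m) = fo (get E) (cod m)) by apply f_cod.
    rewrite Hcm in Hd' |- *.
    destruct (X (fo (get E) (cod m))) as [b1 Hb1]; simpl.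
    rewrite HoK in Hd'.
    rewrite put_comp by assumption. fold m.
    rewrite f_comp.
    2:{ rewrite put_dom; auto. }
    f_equal. destruct (key _ _ (eq_sym Hb1)) as [_ h]. apply h. exact Hd'.
  - split; [split|].
    + exact (conj Ho Hm).
    + intros b d Hd. simpl in *.
      destruct (X (fo (get E) b)) as [b1 Hb1]; simpl.
      rewrite HoK in Hd.
      destruct (key _ _ Hb1) as [k1 k2].
      rewrite k2 by congruence. apply opf. apply put_dom. exact Hd.
    + intros H' [[Ho' Hm'] Hp']. split.
      * apply Hu. exact (conj Ho' Hm').
      * intros c d Hd. simpl. cbv beta; destruct (X c) as [b Hb]; simpl; subst c.
        assert (Hd' : dom d = fo (fcompose (get H') (get E)) b) by exact Hd.
        rewrite <- (Hp' b d Hd'). simpl. rewrite put_get; auto.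
        apply put_dom. exact Hd.
Qed.
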